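(* Let $s$ and $r$ be positive integers with $s\le r$, and let $\alpha_s=(4^s-1)^{1/s}$. Then the number $f_s(r)$ of $s$-bad pairs of binary vectors of length $r$ satisfies $$f_s(r)\le 2s\,4^{s-1}\alpha_s^{\,r}.$$
   Context: Let ${\mathbf e}_1,\ldots,{\mathbf e}_s$ denote the standard basis vectors of length $s$ (binary vectors with a single $1$) and $\mathbf{0}_s$ the zero vector of length $s$. A pair of binary vectors ${\mathbf x}=(x_0,\ldots,x_{r-1})$, ${\mathbf y}=(y_0,\ldots,y_{r-1})\in\{0,1\}^r$ is called $s$-good if for every $h=1,\ldots,s$ there exists at least one pair of indices $(i,j)$ with $0\le i,j\le r-s$ such that $(x_i,\ldots,x_{i+s-1})={\mathbf e}_h$, $(x_j,\ldots,x_{j+s-1})=\mathbf{0}_s$, $(y_i,\ldots,y_{i+s-1})=\mathbf{0}_s$ and $(y_j,\ldots,y_{j+s-1})={\mathbf e}_h$. A pair is $s$-bad if it is not $s$-good. Pairs are ordered pairs, counted among all $4^r$ pairs $({\mathbf x},{\mathbf y})$. *)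

(* Defs.v *)
From mathcomp Require Import all_boot.
From Stdlib Require Import Reals.
Set Implicit Arguments.

Definition bvec (r : nat) := {ffun 'I_r -> bool}.

(* Entry x_k, with value false outside the range 0..r-1 (never used out of range). *)
Definition entry r (x : bvec r) (k : nat) : bool :=
  match insub k with Some j => x j | None => false end.

(* (x_i, ..., x_{i+s-1}) = e_h, with h encoded as k+1 for k : 'I_s
   (e_h has its single 1 in position h, i.e. offset k = h-1). *)
Definition win_is_e r (s : nat) (x : bvec r) (i : nat) (k : 'I_s) : bool :=
  [forall t : 'I_s, entry x (i + t) == (t == k)].

Arguments win_is_e {r} s x i k.

Definition win_is_0 r (s : nat) (x : bvec r) (i : nat) : bool :=
  [forall t : 'I_s, entry x (i + t) == false].

Arguments win_is_0 {r} s x i.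

Definition s_good r (s : nat) (x y : bvec r) : bool :=
  [forall k : 'I_s, [exists i : 'I_(r - s).+1, [exists j : 'I_(r - s).+1,
     [&& win_is_e s x i k, win_is_0 s x j, win_is_0 s y i & win_is_e s y j k]]]].

Arguments s_good {r} s x y.

Definition s_bad r (s : nat) (x y : bvec r) : bool := ~~ s_good s x y.

Arguments s_bad {r} s x y.

Definition f_bad (s r : nat) : nat :=
  #|[set p : bvec r * bvec r | s_bad s p.1 p.2]|.

Definition alpha (s : nat) : R :=
  Rpower (INR (4 ^ s) - 1) (1 / INR s).

(* Main.v *)
Require Import Defs.
From mathcomp Require Import all_boot.
From Stdlib Require Import Reals Lra.

Definition matchp r s (x y : bvec r) (i : nat) (pat : {ffun 'I_s -> bool * bool}) : bool :=
  [forall t : 'I_s, (entry x (i + t), entry y (i + t)) == pat t].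

Arguments matchp {r s}.

Lemma entry_val r (x : bvec r) (j : 'I_r) : entry x j = x j.
Proof. by rewrite /entry valK. Qed.

Section Count.
Variables (s r : nat) (hs : (0 < s)%N) (pat : {ffun 'I_s -> bool * bool}).
Let m := (r %/ s)%N.
Let t := (r %% s)%N.
Let U := {ffun 'I_s -> bool * bool}.

Definition blk (p : bvec r * bvec r) :
  {ffun 'I_m -> U} * {ffun 'I_t -> bool * bool} :=
  ([ffun b : 'I_m => [ffun o : 'I_s => (entry p.1 (b * s + o), entry p.2 (b * s + o))]],
   [ffun o : 'I_t => (entry p.1 (m * s + o), entry p.2 (m * s + o))]).

Lemma blk_inj : injective blk.
Proof.
move=> [x1 y1] [x2 y2] /= E.
have key : forall j : 'I_r, (x1 j, y1 j) = (x2 j, y2 j).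
  move=> j; rewrite -!entry_val.
  have hr : r = (m * s + t)%N by rewrite /m /t -divn_eq.
  case: (ltnP j (m * s)) => hj.
  - have hb : (j %/ s < m)%N by rewrite ltn_divLR.
    have ho : (j %% s < s)%N by rewrite ltn_mod.
    have := congr1 (fun q : {ffun 'I_m -> U} * {ffun 'I_t -> bool * bool} => q.1 (Ordinal hb) (Ordinal ho)) E.
    rewrite /= !ffunE /= -divn_eq. by move=> ->.
  - have ho : (j - m * s < t)%N.
      by rewrite ltn_subLR // -hr.
    have := congr1 (fun q : {ffun 'I_m -> U} * {ffun 'I_t -> bool * bool} => q.2 (Ordinal ho)) E.
    rewrite /= !ffunE /= subnKC //.
by congr pair; apply/ffunP => j; have := key j; case.
Qed.

Lemma count_avoid :
  (#|[set p : bvec r * bvec r | [forall i : 'I_(r - s).+1, ~~ matchp p.1 p.2 i pat]]|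
    <= expn (expn 4 s - 1) m * expn 4 t)%N.
Proof.
set A := [set p | _].
rewrite -(card_imset A blk_inj).
have sub : blk @: A \subset setX [set F | F \in ffun_on (predC1 pat)] setT.
  apply/subsetP => q /imsetP [p]; rewrite inE => /forallP Hp ->.
  rewrite !inE /= andbT; apply/forallP => b; rewrite /= inE.
  have hb : (b * s < (r - s).+1)%N.
    rewrite ltnS leq_subRL; last first.
      apply: leq_trans (leq_trunc_div r s); rewrite -/m.
      by apply: leq_pmull; rewrite (leq_trans _ (ltn_ord b)).
    rewrite -mulSn; apply: leq_trans (leq_trunc_div r s).
    by rewrite leq_mul2r ltn_ord orbT.
  have := Hp (Ordinal hb); apply: contra; rewrite ffunE => /eqP <-.
  by apply/forallP => o; rewrite ffunE.
apply: leq_trans (subset_leq_card sub) _.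
rewrite cardsX cardsT cardsE card_ffun_on card_ffun !card_ord cardC1 card_ffun card_prod card_bool card_ord.
by rewrite subn1.
Qed.
End Count.
Lemma card_bigcup_le (T : finType) n (F : 'I_n -> {set T}) :
  (#|\bigcup_(k < n) F k| <= \sum_(k < n) #|F k|)%N.
Proof.
elim/big_rec2: _ => [|k a U _ le]; first by rewrite cards0.
by rewrite (leq_trans (leq_card_setU (F k) U).1) ?leq_add2l.
Qed.

Definition patA s (k : 'I_s) : {ffun 'I_s -> bool * bool} := [ffun o => (o == k, false)].
Definition patB s (k : 'I_s) : {ffun 'I_s -> bool * bool} := [ffun o => (false, o == k)].

Arguments patA {s}.
Arguments patB {s}.

Lemma matchA r s (x y : bvec r) i (k : 'I_s) :
  win_is_e s x i k && win_is_0 s y i = matchp x y i (patA k).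
Proof.
apply/andP/forallP => [[/forallP H1 /forallP H2] o | H].
  by rewrite ffunE (eqP (H1 o)) (eqP (H2 o)).
split; apply/forallP => o; have := H o; rewrite ffunE => /eqP [E1 E2]; by rewrite ?E1 ?E2.
Qed.

Lemma matchB r s (x y : bvec r) i (k : 'I_s) :
  win_is_0 s x i && win_is_e s y i k = matchp x y i (patB k).
Proof.
apply/andP/forallP => [[/forallP H1 /forallP H2] o | H].
  by rewrite ffunE (eqP (H1 o)) (eqP (H2 o)).
split; apply/forallP => o; have := H o; rewrite ffunE => /eqP [E1 E2]; by rewrite ?E1 ?E2.
Qed.

Definition avoid r s (pat : {ffun 'I_s -> bool * bool}) : {set bvec r * bvec r} :=
  [set p : bvec r * bvec r | [forall i : 'I_(r - s).+1, ~~ matchp p.1 p.2 i pat]].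

Arguments avoid r {s}.

Lemma bad_sub r s :
  [set p : bvec r * bvec r | s_bad s p.1 p.2] \subset
  \bigcup_(k < s) (avoid r (patA k) :|: avoid r (patB k)).
Proof.
apply/subsetP => p; rewrite inE /s_bad /s_good negb_forall => /existsP [k Hk].
apply/bigcupP; exists k => //; rewrite !inE.
apply/orP; case: (boolP [exists i : 'I_(r - s).+1, matchp p.1 p.2 i (patA k)]).
  move=> /existsP [i Hi]; right; apply/forallP => j; apply: contra Hk => Hj.
  apply/existsP; exists i; apply/existsP; exists j.
  by move: Hi Hj; rewrite -matchA -matchB => /andP [-> ->] /andP [-> ->].
by rewrite negb_exists => H; left.
Qed.

Lemma pow_expn a b : Nat.pow a b = expn a b.
Proof. elim: b => [|b IH] //=. by rewrite expnS IH. Qed.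

Lemma fbad_le s r (hs : (0 < s)%N) :
  (f_bad s r <= s * (2 * (expn (expn 4 s - 1) (r %/ s) * expn 4 (r %% s))))%N.
Proof.
have H0 := subset_leq_card (bad_sub r s).
rewrite /f_bad; apply: (leq_trans H0).
have H1 := card_bigcup_le _ _ (fun k : 'I_s => avoid r (patA k) :|: avoid r (patB k)).
apply: (leq_trans H1).
apply: (@leq_trans (\sum_(k < s) (2 * (expn (expn 4 s - 1) (r %/ s) * expn 4 (r %% s))))).
  apply: leq_sum => k _.
  apply: (leq_trans (leq_card_setU _ _).1).
  by rewrite mul2n -addnn leq_add // count_avoid.
by rewrite sum_nat_const card_ord.
Qed.
Theorem lemma3 (s r : nat) (hs : (0 < s)%N) (hsr : (s <= r)%N) :
  (INR (f_bad s r) <= 2 * INR s * INR (4 ^ (s - 1)) * (alpha s) ^ r)%R.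
Proof.
have Hn := fbad_le s r hs.
set m := (r %/ s)%N in Hn *.
set t := (r %% s)%N in Hn *.
have hr : r = (m * s + t)%N by rewrite /m /t -divn_eq.
have ht : (t <= s - 1)%N by rewrite /t -ltnS subn1 prednK // ltn_mod.
have H4s : (1 <= expn 4 s)%N by rewrite expn_gt0.
set A := (INR (4 ^ s) - 1)%R.
have HA : INR (expn 4 s - 1) = A.
  by rewrite /A minus_INR ?pow_expn //; apply/leP.
have HA3 : (1 <= A)%R.
  rewrite -HA; apply: (le_INR 1); apply/leP.
  rewrite leq_subRL //; apply: (@leq_trans (expn 4 1)) => //; by rewrite leq_exp2l.
have HA0 : (0 < A)%R by lra.
have Hs0 : (0 < INR s)%R by apply: lt_0_INR; apply/ltP.
have Halpha : (alpha s ^ r = A ^ m * Rpower A (INR t / INR s))%R.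
  rewrite /alpha -/A -Rpower_pow; last by apply: exp_pos.
  rewrite Rpower_mult hr plus_INR mult_INR.
  have -> : (1 / INR s * (INR m * INR s + INR t) = INR m + INR t / INR s)%R.
    by field; lra.
  by rewrite Rpower_plus Rpower_pow.
have Hrp : (1 <= Rpower A (INR t / INR s))%R.
  rewrite -(Rpower_O A) //; apply: Rle_Rpower => //.
  apply: Rmult_le_pos; [apply: pos_INR | apply: Rlt_le; apply: Rinv_0_lt_compat => //].
have H1 : (INR (f_bad s r) <= INR s * (2 * (A ^ m * INR (4 ^ t))))%R.
  have E2 : INR 2 = 2%R by simpl; lra.
  rewrite -HA -pow_INR -E2 -!mult_INR.
  apply: le_INR; apply/leP; rewrite !pow_expn; exact: Hn.
have H2 : (INR (4 ^ t) <= INR (4 ^ (s - 1)))%R.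
  apply: le_INR; apply/leP; rewrite !pow_expn; exact: leq_pexp2l.
have HAm : (0 <= A ^ m)%R by apply: pow_le; lra.
rewrite Halpha; apply: (Rle_trans _ _ _ H1).
have H0 : (0 <= INR (4 ^ t))%R by apply: pos_INR.
have H3 : (A ^ m * INR (4 ^ t) <= INR (4 ^ (s - 1)) * (A ^ m * Rpower A (INR t / INR s)))%R.
  rewrite [X in (_ <= X)%R]Rmult_comm Rmult_assoc.
  apply: Rmult_le_compat_l => //.
  rewrite -[X in (X <= _)%R]Rmult_1_l.
  apply: Rmult_le_compat => //; lra.
nra.
Qed.
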